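(* Let $\Theta$ be a finite set, $b$ a belief function on $\Theta$ with mass function $m_b$, and $\emptyset \subsetneq A \subseteq \Theta$. The mass vector of the $L_2$ conditional belief function of $b$ with respect to $A$ in the mass space, namely the vector with entries $m_b(B) + \frac{1-b(A)}{2^{|A|}-1}$ for $\emptyset\subsetneq B\subseteq A$ and $0$ elsewhere, is the center of mass $\frac{1}{2^{|A|}-1}\sum_{\emptyset\subsetneq B\subseteq A}\vec{m}[b]|_{L_1}^B A$ of the simplex $\mathcal{M}_{L_1,A}[b]=Cl(\vec{m}[b]|_{L_1}^B A,\ \emptyset\subsetneq B\subseteq A)$ of $L_1$ conditional belief functions of $b$ with respect to $A$ in the mass space, where the vertex $\vec{m}[b]|_{L_1}^B A$ is the mass vector $\vec{m}_a\in\mathcal{M}_A$ with $m_a(B)=m_b(B)+1-b(A)$ and $m_a(X)=m_b(X)$ for all $\emptyset\subsetneq X\subsetneq A$, $X\neq B$.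
   Context: A mass function on a finite set $\Theta$ is $m:2^\Theta\to[0,1]$ with $m(\emptyset)=0$ and $\sum_{A\subseteq\Theta} m(A)=1$; the associated belief function is $b(A)=\sum_{B\subseteq A} m_b(B)$. The mass vector of $b$ is $\vec{m}_b=[m_b(B)]_{\emptyset\subsetneq B\subseteq\Theta}\in\mathbb{R}^{2^{|\Theta|}-1}$. For $\emptyset\subsetneq A\subseteq\Theta$, $\mathcal{M}_A$ is the set of mass vectors of belief functions all of whose focal elements are subsets of $A$. The $L_2$ conditional belief function is the minimizer of $\|\vec{m}_b-\vec{m}_a\|_{L_2}$ (Euclidean distance of mass vectors) over $\vec{m}_a\in\mathcal{M}_A$, and the $L_1$ conditional belief functions are the minimizers of $\sum_{\emptyset\subsetneq B\subseteq\Theta}|m_b(B)-m_a(B)|$ over $\vec{m}_a\in\mathcal{M}_A$. $Cl(\cdot)$ denotes convex hull. *)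

(* Defs.v *)
(* The mass space R^(2^|Theta|-1) is represented by
   {ffun {set T} -> R} whose coordinate at set0 is ignored by the norms and
   forced to 0 for mass vectors. *)
From HB Require Import structures.
From mathcomp Require Import all_boot all_order all_algebra.
Set Implicit Arguments. Unset Strict Implicit. Unset Printing Implicit Defensive.
Import Order.TTheory GRing.Theory Num.Theory.
Local Open Scope ring_scope.

Section Defs.
Variables (R : rcfType) (T : finType).

Definition is_mass (m : {ffun {set T} -> R}) : Prop :=
  m set0 = 0 /\ (forall B, 0 <= m B) /\ \sum_(B : {set T}) m B = 1.

Definition belief (m : {ffun {set T} -> R}) (A : {set T}) : R :=
  \sum_(B : {set T} | B \subset A) m B.

Definition in_MA (A : {set T}) (ma : {ffun {set T} -> R}) : Prop :=
  is_mass ma /\ (forall X : {set T}, ma X != 0 -> X \subset A).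

Definition L2dist (m1 m2 : {ffun {set T} -> R}) : R :=
  Num.sqrt (\sum_(B : {set T} | B != set0) (m1 B - m2 B) ^+ 2).

Definition is_L2_conditional (mb : {ffun {set T} -> R}) (A : {set T})
    (ma : {ffun {set T} -> R}) : Prop :=
  in_MA A ma /\ (forall ma' : {ffun {set T} -> R}, in_MA A ma' ->
                   L2dist mb ma <= L2dist mb ma').

Definition L2_formula (mb : {ffun {set T} -> R}) (A : {set T}) : {ffun {set T} -> R} :=
  [ffun X : {set T} => if (X != set0) && (X \subset A)
     then mb X + (1 - belief mb A) / ((2 ^ #|A|)%:R - 1) else 0].

Definition L1_vertex (mb : {ffun {set T} -> R}) (A B : {set T}) : {ffun {set T} -> R} :=
  [ffun X : {set T} => if (X != set0) && (X \subset A)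
     then mb X + (if X == B then 1 - belief mb A else 0) else 0].

Definition L1_barycenter (mb : {ffun {set T} -> R}) (A : {set T}) : {ffun {set T} -> R} :=
  [ffun X : {set T} => ((2 ^ #|A|)%:R - 1)^-1 *
     \sum_(B : {set T} | (B != set0) && (B \subset A)) L1_vertex mb A B X].

End Defs.

(* Main.v *)
Require Import Defs.
From HB Require Import structures.
From mathcomp Require Import all_boot all_order all_algebra.
From mathcomp Require Import ring lra.
Import Order.TTheory GRing.Theory Num.Theory.
Local Open Scope ring_scope.

Lemma sum_supp (R : rcfType) (T : finType) (A : {set T}) (m : {ffun {set T} -> R}) :
  m set0 = 0 -> (forall X, m X != 0 -> X \subset A) ->
  \sum_(B | (B != set0) && (B \subset A)) m B = \sum_B m B.
Proof.
move=> m0 hs; rewrite [RHS](bigID (fun B => (B != set0) && (B \subset A))) /=.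
rewrite [X in _ + X]big1 ?addr0 // => B; rewrite negb_and negbK => /orP[/eqP->//|nsub].
by apply/eqP/negPn/negP => /hs; rewrite (negbTE nsub).
Qed.

Lemma card_ne (T : finType) (A : {set T}) (R : rcfType) :
  \sum_(B : {set T} | (B != set0) && (B \subset A)) (1 : R) = (2 ^ #|A|)%:R - 1.
Proof.
have h : \sum_(B : {set T} | B \subset A) (1 : R) = (2 ^ #|A|)%:R.
  rewrite -card_powerset -sum1_card natr_sum; apply: eq_bigl => B.
  by rewrite inE.
rewrite -h [in RHS](bigD1 set0) ?sub0set //= addrC addrK.
by apply: eq_bigl => B; rewrite andbC.
Qed.

Lemma N_gt0 (T : finType) (A : {set T}) (R : rcfType) :
  A != set0 -> 0 < (2 ^ #|A|)%:R - 1 :> R.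
Proof.
move=> hA; have hc : (0 < #|A|)%N by rewrite card_gt0.
have h2 : (2 <= 2 ^ #|A|)%N.
  by rewrite -[X in (X <= _)%N]expn1 leq_pexp2l.
rewrite subr_gt0 -[1]/(1%:R) ltr_nat; exact: leq_trans h2.
Qed.

Lemma belief_sum (R : rcfType) (T : finType) (mb : {ffun {set T} -> R}) (A : {set T}) :
  mb set0 = 0 ->
  \sum_(B | (B != set0) && (B \subset A)) mb B = belief mb A.
Proof.
move=> m0; rewrite /belief [RHS](bigD1 set0) ?sub0set //= m0 add0r.
by apply: eq_bigl => B; rewrite andbC.
Qed.

Lemma belief_le1 (R : rcfType) (T : finType) (mb : {ffun {set T} -> R}) (A : {set T}) :
  is_mass mb -> belief mb A <= 1.
Proof.
move=> [_ [hp hs]]; rewrite -hs /belief [X in _ <= X](bigID (fun B : {set T} => B \subset A)) /=.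
by rewrite lerDl sumr_ge0.
Qed.

Lemma bary (R : rcfType) (T : finType) (mb : {ffun {set T} -> R}) (A : {set T}) :
  A != set0 -> L2_formula mb A = L1_barycenter mb A.
Proof.
move=> hA; have hN := @N_gt0 T A R hA.
apply/ffunP => X; rewrite !ffunE.
under eq_bigr => B _ do rewrite ffunE.
case: ifP => hX; last by rewrite big1 ?mulr0.
rewrite big_split /= sumr_const.
rewrite (bigD1 X) //= eqxx big1 ?addr0; last by move=> B /andP[_ ]; rewrite eq_sym => /negbTE ->.
set N := (2 ^ #|A|)%:R - 1.
rewrite -mulr_natr.
have -> : (#|(fun i : {set T} => (i != set0) && (i \subset A))|)%:R = N.
  by rewrite /N -(@card_ne T A R) sumr_const.
have hN0 : N != 0 by rewrite /N gt_eqF.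
rewrite mulrDr (mulrC N^-1 (mb X * N)) -mulrA divff // mulr1 [X in _ + X]mulrC.
by [].
Qed.

Lemma c_supp (R : rcfType) (T : finType) (mb : {ffun {set T} -> R}) (A : {set T}) X :
  L2_formula mb A X != 0 -> X \subset A.
Proof. by rewrite ffunE; case: ifP => [/andP[]//|]; rewrite eqxx. Qed.

Lemma c_set0 (R : rcfType) (T : finType) (mb : {ffun {set T} -> R}) (A : {set T}) :
  L2_formula mb A set0 = 0.
Proof. by rewrite ffunE eqxx. Qed.

Lemma c_sum (R : rcfType) (T : finType) (mb : {ffun {set T} -> R}) (A : {set T}) :
  is_mass mb -> A != set0 ->
  \sum_(B | (B != set0) && (B \subset A)) L2_formula mb A B = 1.
Proof.
move=> hm hA; have hN := @N_gt0 T A R hA.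
rewrite (eq_bigr (fun B => mb B + (1 - belief mb A) / ((2 ^ #|A|)%:R - 1))); last first.
  by move=> B hB; rewrite ffunE hB.
rewrite big_split /= belief_sum; last by case: hm.
under eq_bigr => B _ do rewrite -[_ / _]mul1r.
rewrite -mulr_suml (@card_ne T A R) mulrCA mulfV ?gt_eqF // mulr1.
by rewrite addrC subrK.
Qed.

Lemma c_MA (R : rcfType) (T : finType) (mb : {ffun {set T} -> R}) (A : {set T}) :
  is_mass mb -> A != set0 -> in_MA A (L2_formula mb A).
Proof.
move=> hm hA; have hN := @N_gt0 T A R hA.
split; last exact: c_supp.
split; first exact: c_set0.
split; last by rewrite -(@sum_supp R T A _ (c_set0 R T mb A) (@c_supp R T mb A)) c_sum.
move=> B; rewrite ffunE; case: ifP => // _.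
case: (hm) => _ [hp _]; apply: addr_ge0 => //; apply: divr_ge0; last exact: ltW.
by rewrite subr_ge0 belief_le1.
Qed.

Lemma sq_id (R : rcfType) (x z d : R) :
  (x - z) ^+ 2 = (x - (x + d)) ^+ 2 + ((x + d) - z) ^+ 2 - (2 * d) * ((x + d) - z).
Proof. ring. Qed.

Definition S2 {R : rcfType} {T : finType} (mb m : {ffun {set T} -> R}) : R :=
  \sum_(B : {set T} | B != set0) (mb B - m B) ^+ 2.

Lemma key (R : rcfType) (T : finType) (mb : {ffun {set T} -> R}) (A : {set T})
  (ma : {ffun {set T} -> R}) :
  is_mass mb -> A != set0 -> in_MA A ma ->
  S2 mb ma = S2 mb (L2_formula mb A) +
     \sum_(B | (B != set0) && (B \subset A)) (L2_formula mb A B - ma B) ^+ 2.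
Proof.
move=> hm hA [[ma0 [map masum]] masupp].
set c := L2_formula mb A.
set d := (1 - belief mb A) / ((2 ^ #|A|)%:R - 1).
rewrite /S2 (bigID (fun B : {set T} => B \subset A)) /=.
rewrite [X in _ = X + _](bigID (fun B : {set T} => B \subset A)) /=.
have -> : \sum_(B | (B != set0) && ~~ (B \subset A)) (mb B - ma B) ^+ 2 =
          \sum_(B | (B != set0) && ~~ (B \subset A)) (mb B - c B) ^+ 2.
  apply: eq_bigr => B /andP[_ nB].
  have -> : ma B = 0 by apply/eqP/negPn/negP => /masupp; rewrite (negbTE nB).
  by rewrite /c ffunE (negbTE nB) andbF.
rewrite (eq_bigr (fun B => (mb B - c B) ^+ 2 + (c B - ma B) ^+ 2 - (2 * d) * (c B - ma B))); last first.
  by move=> B hB; rewrite /c ffunE hB -/d; apply: sq_id.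
rewrite big_split /= big_split /= sumrN -mulr_sumr sumrB.
rewrite (@c_sum R T mb A hm hA).
rewrite (@sum_supp R T A ma ma0 masupp) masum subrr mulr0 subr0.
by rewrite addrAC.
Qed.


Arguments c_MA {R T mb A}.
Arguments key {R T mb A ma}.
Arguments bary {R T mb A}.

Lemma S2_ge0 (R : rcfType) (T : finType) (mb m : {ffun {set T} -> R}) : 0 <= S2 mb m.
Proof. by apply: sumr_ge0 => B _; exact: sqr_ge0. Qed.

Theorem theorem4 (R : rcfType) (T : finType) (mb : {ffun {set T} -> R})
    (A : {set T}) (hmb : is_mass mb) (hA : A != set0) :
  L2_formula mb A = L1_barycenter mb A /\
  (forall ma : {ffun {set T} -> R},
      is_L2_conditional mb A ma <-> ma = L1_barycenter mb A).
Proof.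
split; first exact: bary.
move=> ma; rewrite -bary //; split.
- move=> [hma hmin]; have := hmin _ (c_MA hmb hA).
  rewrite /L2dist ler_sqrt; last exact: (S2_ge0 _ _ mb (L2_formula mb A)).
  rewrite -/(S2 mb ma) -/(S2 mb (L2_formula mb A)) (key hmb hA hma).
  rewrite gerDl => hle.
  have hQ : \sum_(B | (B != set0) && (B \subset A)) (L2_formula mb A B - ma B) ^+ 2 = 0.
    by apply/eqP; rewrite eq_le hle sumr_ge0 // => B _; exact: sqr_ge0.
  apply/ffunP => X.
  case hX: ((X != set0) && (X \subset A)).
    have := psumr_eq0P (fun B _ => sqr_ge0 (L2_formula mb A B - ma B)) hQ hX.
    by move/eqP; rewrite sqrf_eq0 subr_eq0 => /eqP ->.
  case: hma => [[ma0 _] msupp].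
  have -> : L2_formula mb A X = 0 by rewrite ffunE hX.
  move: hX; case: eqP => [-> _|_ /= nX]; first by rewrite ma0.
  by apply/eqP/negPn/negP => /msupp; rewrite nX.
- move=> ->; split; first exact: c_MA.
  move=> ma' hma'; rewrite /L2dist ler_sqrt; last exact: (S2_ge0 _ _ mb ma').
  rewrite -/(S2 mb ma') -/(S2 mb (L2_formula mb A)) (key hmb hA hma').
  by rewrite lerDl sumr_ge0 // => B _; exact: sqr_ge0.
Qed.
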